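(* Let $\mathbf G$ be a simplicial group with Moore complex $\mathbf{NG}$, and suppose $G_3=D_3$, the subgroup of $G_3$ generated by degenerate elements. For $a,b\in NG_1$ put $\omega(a,b)=s_0a\,s_1b\,s_0a^{-1}\,s_1a\,s_1b^{-1}\,s_1a^{-1}\in NG_2$. Let $P_3(\partial_1)\subseteq NG_1$ be the subgroup generated by $\langle x,\langle y,z\rangle\rangle$ and $\langle\langle x,y\rangle,z\rangle$ ($x,y,z\in NG_1$), where $\partial_1=d_1|_{NG_1}:NG_1\to NG_0=G_0$ and $\langle x,y\rangle={}^{\partial_1x}y\,xy^{-1}x^{-1}$ (with $G_0$ acting on $NG_1$ by ${}^{g}y=s_0(g)ys_0(g)^{-1}$), and let $P_3'(\partial_1)\subseteq NG_2/\partial_3NG_3$ be the subgroup generated by the classes of $\omega(\langle x,y\rangle,z)$ and $\omega(x,\langle y,z\rangle)$. Set $M=NG_1/P_3(\partial_1)$, $L=(NG_2/\partial_3NG_3)/P_3'(\partial_1)$, $N=NG_0$, with quotient maps $q_1:NG_1\to M$, $q_2:NG_2/\partial_3NG_3\to L$. Let $\partial:M\to N$ be induced by $d_1$, $\delta:L\to M$ by $d_2$, and let $\omega:C\otimes C\to L$, $C=(M^{cr})^{ab}$, be given by $\omega(\overline{q_1x}\otimes\overline{q_1y})=q_2(\overline{\omega(x,y)})$ for $x,y\in NG_1$. Then these maps are well defined and, with the actions of $N$ induced by conjugation by degeneracies of elements of $G_0$, $C\otimes C\xrightarrow{\omega}L\xrightarrow{\delta}M\xrightarrow{\partial}N$ is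 a quadratic module.
   Context: For a simplicial group $\mathbf G$ with faces $d_i$ and degeneracies $s_i$, the Moore complex is $NG_n=\bigcap_{i=0}^{n-1}\ker d_i^n$ with $\partial_n=d_n^n|_{NG_n}:NG_n\to NG_{n-1}$; $\partial_3NG_3$ is normal in $NG_2$. A pre-crossed module is a homomorphism $\partial:M\to N$ with an $N$-action on $M$ such that $\partial({}^{n}m)=n\partial(m)n^{-1}$; Peiffer commutator $\langle x,y\rangle={}^{\partial x}y\,xy^{-1}x^{-1}$; $P_2(\partial)$ the subgroup generated by Peiffer commutators; a nil(2)-module is a pre-crossed module in which all length-3 Peiffer commutators $\langle\langle x,y\rangle,z\rangle,\langle x,\langle y,z\rangle\rangle$ are trivial; $M^{cr}=M/P_2(\partial)$; $G^{ab}=G/[G,G]$; $C\otimes C$ is the tensor product of abelian groups; $x\mapsto\bar x$ denotes $M\to C$. A quadratic module $(\omega,\delta,\partial)$ is a diagram of homomorphisms $C\otimes C\xrightarrow{\omega}L\xrightarrow{\delta}M\xrightarrow{\partial}N$, with $w:C\otimes C\to M$, such that: QM1 $\partial$ is a nil(2)-module, $C=(M^{cr})^{ab}$, $w(\bar x\otimes\bar y)=\langle x,y\rangle$; QM2 $\partial\delta=1$ and $\delta\omega=w$; QM3 $L$ is an $N$-group, all maps are $N$-equivariant and ${}^{\partial x}a=\omega((\bar x\otimes\overline{\delta a})(\overline{\delta a}\otimes\bar x))a$ for $a\in L,x\in M$; QM4 $\omega(\overline{\delta a}\otimes\overline{\delta b})=[b,a]$ for $a,b\in L$. *)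

(* Defs.v *)
From HB Require Import structures.
From mathcomp Require Import all_boot ssralg.

Set Implicit Arguments.
Unset Strict Implicit.
Unset Printing Implicit Defensive.

Local Open Scope group_scope.

Definition gcomm (G : groupType) (x y : G) : G := x * y * x^-1 * y^-1.

Definition is_subgroup (G : groupType) (H : G -> Prop) : Prop :=
  [/\ H 1, (forall x y, H x -> H y -> H (x * y)) & (forall x, H x -> H x^-1)].

Definition gen_by (G : groupType) (S : G -> Prop) (x : G) : Prop :=
  forall H : G -> Prop, is_subgroup H -> (forall y, S y -> H y) -> H x.

Definition commutator_subgroup (G : groupType) : G -> Prop :=
  gen_by (fun z => exists a b : G, z = gcomm a b).

Definition is_hom (G H : groupType) (f : G -> H) : Prop :=
  forall x y, f (x * y) = f x * f y.

(* [q] restricted to the subgroup [H] of [G] is a surjective homomorphism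
   onto [Q] whose kernel is [K]; i.e. [Q] is (a model of) the quotient H/K
   and [q] the quotient map. *)
Definition is_quotient_map (G Q : groupType) (H K : G -> Prop) (q : G -> Q)
  : Prop :=
  [/\ (forall x y, H x -> H y -> q (x * y) = q x * q y),
      (forall m : Q, exists2 x, H x & q x = m) &
      (forall x, H x -> (q x = 1 <-> K x))].

Definition is_abelianization (G : groupType) (C : zmodType) (c : G -> C)
  : Prop :=
  [/\ (forall x y, c (x * y) = (c x + c y)%R),
      (forall m : C, exists x, c x = m) &
      (forall x, c x = 0%R <-> commutator_subgroup x)].

Definition biadditive (C A : zmodType) (f : C -> C -> A) : Prop :=
  (forall a a' b, f (a + a')%R b = (f a b + f a' b)%R) /\
  (forall a b b', f a (b + b')%R = (f a b + f a b')%R).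

Definition additive_map (A B : zmodType) (g : A -> B) : Prop :=
  forall u v, g (u + v)%R = (g u + g v)%R.

Definition is_tensor_square (C T : zmodType) (t : C -> C -> T) : Prop :=
  biadditive t /\
  forall (A : zmodType) (f : C -> C -> A), biadditive f ->
    exists g : T -> A,
      [/\ additive_map g, (forall a b, g (t a b) = f a b) &
          (forall g' : T -> A, additive_map g' ->
             (forall a b, g' (t a b) = f a b) -> forall u, g' u = g u)].

Definition is_group_action (N G : groupType) (act : N -> G -> G) : Prop :=
  [/\ (forall x, act 1 x = x),
      (forall n n' x, act (n * n') x = act n (act n' x)) &
      (forall n x y, act n (x * y) = act n x * act n y)].

Definition is_zmod_action (N : groupType) (A : zmodType) (act : N -> A -> A)
  : Prop :=
  [/\ (forall x, act 1 x = x),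
      (forall n n' x, act (n * n') x = act n (act n' x)) &
      (forall n x y, act n (x + y)%R = (act n x + act n y)%R)].

Definition pre_crossed_module (M N : groupType) (act : N -> M -> M)
  (d : M -> N) : Prop :=
  [/\ is_hom d, is_group_action act &
      (forall n m, d (act n m) = n * d m * n^-1)].

Definition peiffer (M N : groupType) (act : N -> M -> M) (d : M -> N)
  (x y : M) : M := act (d x) y * x * y^-1 * x^-1.

Definition peiffer_subgroup (M N : groupType) (act : N -> M -> M)
  (d : M -> N) : M -> Prop :=
  gen_by (fun z => exists x y, z = peiffer act d x y).

Definition nil2_module (M N : groupType) (act : N -> M -> M) (d : M -> N)
  : Prop :=
  pre_crossed_module act d /\
  forall x y z : M,
    peiffer act d (peiffer act d x y) z = 1 /\
    peiffer act d x (peiffer act d y z) = 1.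

(* The data (Mcr, qcr), (C, cab), (T, t) are models of
   M^cr = M / P_2(d), C = (M^cr)^ab and T = C (x) C; the class of x in C is
   cab (qcr x). *)
Definition quadratic_module
  (L M N : groupType) (actM : N -> M -> M) (actL : N -> L -> L)
  (Mcr : groupType) (qcr : M -> Mcr) (C : zmodType) (cab : Mcr -> C)
  (T : zmodType) (t : C -> C -> T)
  (om : T -> L) (del : L -> M) (d : M -> N) : Prop :=
  let bar := fun x : M => cab (qcr x) in
  [/\ nil2_module actM d,
      is_quotient_map (fun _ => True) (peiffer_subgroup actM d) qcr,
      is_abelianization cab,
      is_tensor_square t &
      exists w : T -> M,
        [/\ (forall u v, w (u + v)%R = w u * w v),
            (forall x y, w (t (bar x) (bar y)) = peiffer actM d x y) &
            (forall u, del (om u) = w u)]] /\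
  [/\ (forall a, d (del a) = 1),
      (forall u v, om (u + v)%R = om u * om v),
      is_hom del,
      [/\ is_group_action actL,
          (forall n a, del (actL n a) = actM n (del a)),
          (exists actT : N -> T -> T,
             [/\ is_zmod_action actT,
                 (forall n x y, actT n (t (bar x) (bar y))
                                = t (bar (actM n x)) (bar (actM n y))) &
                 (forall n u, om (actT n u) = actL n (om u))]) &
          (forall (a : L) (x : M),
             actL (d x) a
             = om (t (bar x) (bar (del a)) + t (bar (del a)) (bar x))%R * a)] &
      (forall a b : L, om (t (bar (del a)) (bar (del b))) = gcomm b a)].

(* face S n i = d_i : G_{n+1} -> G_n (0 <= i <= n+1),
   degen S n i = s_i : G_n -> G_{n+1} (0 <= i <= n). *)
Unset Implicit Arguments.
Record simplicial_group := SimplicialGroup {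
  SG : nat -> groupType;
  face : forall n : nat, nat -> SG n.+1 -> SG n;
  degen : forall n : nat, nat -> SG n -> SG n.+1;
  face_hom : forall n i (x y : SG n.+1),
    face n i (x * y) = face n i x * face n i y;
  degen_hom : forall n i (x y : SG n),
    degen n i (x * y) = degen n i x * degen n i y;
  face_face : forall n i j (x : SG n.+2), i < j -> j <= n.+2 ->
    face n i (face n.+1 j x) = face n j.-1 (face n.+1 i x);
  face_degen_lt : forall n i j (x : SG n.+1), i < j -> j <= n.+1 ->
    face n.+1 i (degen n.+1 j x) = degen n j.-1 (face n i x);
  face_degen_eq : forall n j (x : SG n), j <= n ->
    face n j (degen n j x) = x;
  face_degen_succ : forall n j (x : SG n), j <= n ->
    face n j.+1 (degen n j x) = x;
  face_degen_gt : forall n i j (x : SG n.+1), j.+1 < i -> i <= n.+2 ->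
    face n.+1 i (degen n.+1 j x) = degen n j (face n i.-1 x);
  degen_degen : forall n i j (x : SG n), i <= j -> j <= n ->
    degen n.+1 i (degen n j x) = degen n.+1 j.+1 (degen n i x)
}.
Set Implicit Arguments.

Section Simplicial.
Variable S : simplicial_group.
Local Notation G := (SG S).
Local Notation d := (face S).
Local Notation s := (degen S).

Definition moore (n : nat) : G n -> Prop :=
  match n return G n -> Prop with
  | 0 => fun _ => True
  | m.+1 => fun x => forall i, i <= m -> d m i x = 1
  end.

Definition degenerate3 (x : G 3) : Prop := exists i (y : G 2), i <= 2 /\ x = s 2 i y.
Definition D3 : G 3 -> Prop := gen_by degenerate3.

Definition act1 (g : G 0) (y : G 1) : G 1 := s 0 0 g * y * (s 0 0 g)^-1.

Definition act2 (g : G 0) (y : G 2) : G 2 :=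
  s 1 0 (s 0 0 g) * y * (s 1 0 (s 0 0 g))^-1.

Definition del1 (x : G 1) : G 0 := d 0 1 x.

Definition peiffer1 (x y : G 1) : G 1 := act1 (del1 x) y * x * y^-1 * x^-1.

Definition omega (a b : G 1) : G 2 :=
  s 1 0 a * s 1 1 b * (s 1 0 a)^-1 * s 1 1 a * (s 1 1 b)^-1 * (s 1 1 a)^-1.

Definition P3 : G 1 -> Prop :=
  gen_by (fun z => exists x y w, [/\ moore x, moore y, moore w &
            (z = peiffer1 x (peiffer1 y w) \/ z = peiffer1 (peiffer1 x y) w)]).

Definition bd3 (x : G 2) : Prop := exists2 y : G 3, moore y & d 2 3 y = x.

Definition P3' (Q : groupType) (q : G 2 -> Q) : Q -> Prop :=
  gen_by (fun z => exists x y w, [/\ moore x, moore y, moore w &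
            (z = q (omega (peiffer1 x y) w) \/ z = q (omega x (peiffer1 y w)))]).

End Simplicial.

(* Main.v *)
Require Import Defs.
From HB Require Import structures.
From mathcomp Require Import all_boot ssralg boolp.
Local Open Scope group_scope.
Set Implicit Arguments.
Unset Strict Implicit.
Set Implicit Arguments.
Unset Strict Implicit.

Section Basic.
Variable S : simplicial_group.

Lemma hom1 (G H : groupType) (f : G -> H) : (forall x y, f (x * y) = f x * f y) -> f 1 = 1.
Proof. move=> hf; apply: (mulgI (f 1)); by rewrite -hf !mulg1. Qed.
Lemma homV (G H : groupType) (f : G -> H) : (forall x y, f (x * y) = f x * f y) -> forall x, f x^-1 = (f x)^-1.
Proof. move=> hf x; apply: (mulgI (f x)); by rewrite -hf !mulgV (hom1 hf). Qed.

Lemma face_mul n i (x y : SG S n.+1) : face S n i (x * y) = face S n i x * face S n i y.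
Proof. exact: face_hom. Qed.
Lemma degen_mul n i (x y : SG S n) : degen S n i (x * y) = degen S n i x * degen S n i y.
Proof. exact: degen_hom. Qed.
Lemma face_one n i : face S n i 1 = 1. Proof. exact: hom1 (face_hom S n i). Qed.
Lemma degen_one n i : degen S n i 1 = 1. Proof. exact: hom1 (degen_hom S n i). Qed.
Lemma face_inv n i (x : SG S n.+1) : face S n i x^-1 = (face S n i x)^-1.
Proof. exact: (homV (face_hom S n i) x). Qed.
Lemma degen_inv n i (x : SG S n) : degen S n i x^-1 = (degen S n i x)^-1.
Proof. exact: (homV (degen_hom S n i) x). Qed.
Lemma fd_0_0_0 (x : SG S 0) : face S 0 0 (degen S 0 0 x) = x.
Proof. by rewrite (face_degen_eq S 0 0). Qed.
Lemma fd_0_1_0 (x : SG S 0) : face S 0 1 (degen S 0 0 x) = x.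
Proof. by rewrite (face_degen_succ S 0 0). Qed.
Lemma fd_1_0_0 (x : SG S 1) : face S 1 0 (degen S 1 0 x) = x.
Proof. by rewrite (face_degen_eq S 1 0). Qed.
Lemma fd_1_1_0 (x : SG S 1) : face S 1 1 (degen S 1 0 x) = x.
Proof. by rewrite (face_degen_succ S 1 0). Qed.
Lemma fd_1_2_0 (x : SG S 1) : face S 1 2 (degen S 1 0 x) = degen S 0 0 (face S 0 1 x).
Proof. by rewrite (face_degen_gt S 0 2 0). Qed.
Lemma fd_1_0_1 (x : SG S 1) : face S 1 0 (degen S 1 1 x) = degen S 0 0 (face S 0 0 x).
Proof. by rewrite (face_degen_lt S 0 0 1). Qed.
Lemma fd_1_1_1 (x : SG S 1) : face S 1 1 (degen S 1 1 x) = x.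
Proof. by rewrite (face_degen_eq S 1 1). Qed.
Lemma fd_1_2_1 (x : SG S 1) : face S 1 2 (degen S 1 1 x) = x.
Proof. by rewrite (face_degen_succ S 1 1). Qed.
Lemma fd_2_0_0 (x : SG S 2) : face S 2 0 (degen S 2 0 x) = x.
Proof. by rewrite (face_degen_eq S 2 0). Qed.
Lemma fd_2_1_0 (x : SG S 2) : face S 2 1 (degen S 2 0 x) = x.
Proof. by rewrite (face_degen_succ S 2 0). Qed.
Lemma fd_2_2_0 (x : SG S 2) : face S 2 2 (degen S 2 0 x) = degen S 1 0 (face S 1 1 x).
Proof. by rewrite (face_degen_gt S 1 2 0). Qed.
Lemma fd_2_3_0 (x : SG S 2) : face S 2 3 (degen S 2 0 x) = degen S 1 0 (face S 1 2 x).
Proof. by rewrite (face_degen_gt S 1 3 0). Qed.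
Lemma fd_2_0_1 (x : SG S 2) : face S 2 0 (degen S 2 1 x) = degen S 1 0 (face S 1 0 x).
Proof. by rewrite (face_degen_lt S 1 0 1). Qed.
Lemma fd_2_1_1 (x : SG S 2) : face S 2 1 (degen S 2 1 x) = x.
Proof. by rewrite (face_degen_eq S 2 1). Qed.
Lemma fd_2_2_1 (x : SG S 2) : face S 2 2 (degen S 2 1 x) = x.
Proof. by rewrite (face_degen_succ S 2 1). Qed.
Lemma fd_2_3_1 (x : SG S 2) : face S 2 3 (degen S 2 1 x) = degen S 1 1 (face S 1 2 x).
Proof. by rewrite (face_degen_gt S 1 3 1). Qed.
Lemma fd_2_0_2 (x : SG S 2) : face S 2 0 (degen S 2 2 x) = degen S 1 1 (face S 1 0 x).
Proof. by rewrite (face_degen_lt S 1 0 2). Qed.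
Lemma fd_2_1_2 (x : SG S 2) : face S 2 1 (degen S 2 2 x) = degen S 1 1 (face S 1 1 x).
Proof. by rewrite (face_degen_lt S 1 1 2). Qed.
Lemma fd_2_2_2 (x : SG S 2) : face S 2 2 (degen S 2 2 x) = x.
Proof. by rewrite (face_degen_eq S 2 2). Qed.
Lemma fd_2_3_2 (x : SG S 2) : face S 2 3 (degen S 2 2 x) = x.
Proof. by rewrite (face_degen_succ S 2 2). Qed.
Lemma ff_0_0_1 (x : SG S 2) : face S 0 0 (face S 1 1 x) = face S 0 0 (face S 1 0 x).
Proof. by rewrite (face_face S 0 0 1). Qed.
Lemma ff_0_0_2 (x : SG S 2) : face S 0 0 (face S 1 2 x) = face S 0 1 (face S 1 0 x).
Proof. by rewrite (face_face S 0 0 2). Qed.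
Lemma ff_0_1_2 (x : SG S 2) : face S 0 1 (face S 1 2 x) = face S 0 1 (face S 1 1 x).
Proof. by rewrite (face_face S 0 1 2). Qed.
Lemma ff_1_0_1 (x : SG S 3) : face S 1 0 (face S 2 1 x) = face S 1 0 (face S 2 0 x).
Proof. by rewrite (face_face S 1 0 1). Qed.
Lemma ff_1_0_2 (x : SG S 3) : face S 1 0 (face S 2 2 x) = face S 1 1 (face S 2 0 x).
Proof. by rewrite (face_face S 1 0 2). Qed.
Lemma ff_1_1_2 (x : SG S 3) : face S 1 1 (face S 2 2 x) = face S 1 1 (face S 2 1 x).
Proof. by rewrite (face_face S 1 1 2). Qed.
Lemma ff_1_0_3 (x : SG S 3) : face S 1 0 (face S 2 3 x) = face S 1 2 (face S 2 0 x).
Proof. by rewrite (face_face S 1 0 3). Qed.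
Lemma ff_1_1_3 (x : SG S 3) : face S 1 1 (face S 2 3 x) = face S 1 2 (face S 2 1 x).
Proof. by rewrite (face_face S 1 1 3). Qed.
Lemma ff_1_2_3 (x : SG S 3) : face S 1 2 (face S 2 3 x) = face S 1 2 (face S 2 2 x).
Proof. by rewrite (face_face S 1 2 3). Qed.
Lemma ss_0_0_0 (x : SG S 0) : degen S 1 0 (degen S 0 0 x) = degen S 1 1 (degen S 0 0 x).
Proof. by rewrite (degen_degen S 0 0 0). Qed.
Lemma ss_1_0_0 (x : SG S 1) : degen S 2 0 (degen S 1 0 x) = degen S 2 1 (degen S 1 0 x).
Proof. by rewrite (degen_degen S 1 0 0). Qed.
Lemma ss_1_0_1 (x : SG S 1) : degen S 2 0 (degen S 1 1 x) = degen S 2 2 (degen S 1 0 x).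
Proof. by rewrite (degen_degen S 1 0 1). Qed.
Lemma ss_1_1_1 (x : SG S 1) : degen S 2 1 (degen S 1 1 x) = degen S 2 2 (degen S 1 1 x).
Proof. by rewrite (degen_degen S 1 1 1). Qed.

Ltac simp_sd := repeat progress rewrite ?face_mul ?face_inv ?face_one ?degen_mul ?degen_inv ?degen_one ?fd_0_0_0 ?fd_0_1_0 ?fd_1_0_0 ?fd_1_1_0 ?fd_1_2_0 ?fd_1_0_1 ?fd_1_1_1 ?fd_1_2_1 ?fd_2_0_0 ?fd_2_1_0 ?fd_2_2_0 ?fd_2_3_0 ?fd_2_0_1 ?fd_2_1_1 ?fd_2_2_1 ?fd_2_3_1 ?fd_2_0_2 ?fd_2_1_2 ?fd_2_2_2 ?fd_2_3_2 ?ff_0_0_1 ?ff_0_0_2 ?ff_0_1_2 ?ff_1_0_1 ?ff_1_0_2 ?ff_1_1_2 ?ff_1_0_3 ?ff_1_1_3 ?ff_1_2_3 ?ss_0_0_0 ?ss_1_0_0 ?ss_1_0_1 ?ss_1_1_1.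

Ltac gnorm := rewrite ?invgM ?invgK ?invg1; rewrite ?mulgA;
  repeat progress rewrite ?mulgK ?mulgVK ?mulVg ?mulgV ?mul1g ?mulg1.

Definition proj3 (z : SG S 3) : SG S 3 :=
  let z0 := z * (degen S 2 0 (face S 2 0 z))^-1 in
  let z1 := z0 * (degen S 2 1 (face S 2 1 z0))^-1 in
  z1 * (degen S 2 2 (face S 2 2 z1))^-1.

Lemma proj3_moore z : moore (proj3 z).
Proof.
move=> i hi; rewrite /proj3.
case: i hi => [|[|[|]]] // _; simp_sd; gnorm; done.
Qed.

Lemma K2 (m : SG S 1) (l : SG S 2) (hm : face S 0 0 m = 1) (hl0 : face S 1 0 l = 1) (hl1 : face S 1 1 l = 1) :
  face S 2 3 (proj3 (gcomm (degen S 2 1 (degen S 1 0 m)) (degen S 2 2 l))) =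
  (degen S 1 0 (degen S 0 0 (face S 0 1 m)) * l * (degen S 1 0 (degen S 0 0 (face S 0 1 m)))^-1) *
  (degen S 1 0 m * l * (degen S 1 0 m)^-1)^-1.
Proof.
rewrite /proj3 /gcomm; simp_sd; rewrite ?hm ?hl0 ?hl1; simp_sd; gnorm; done.
Qed.

Lemma K3 (m : SG S 1) (l : SG S 2) (hm : face S 0 0 m = 1) (hl0 : face S 1 0 l = 1) (hl1 : face S 1 1 l = 1) :
  face S 2 3 (proj3 (gcomm (degen S 2 2 (degen S 1 0 m)) (degen S 2 1 l))) =
  omega m (face S 1 2 l) * (degen S 1 1 m * l * (degen S 1 1 m)^-1) *
  (degen S 1 0 m * l * (degen S 1 0 m)^-1)^-1.
Proof.
rewrite /proj3 /gcomm /omega; simp_sd; rewrite ?hm ?hl0 ?hl1; simp_sd; gnorm; done.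
Qed.

Lemma K5 (m : SG S 1) (l : SG S 2) (hm : face S 0 0 m = 1) (hl0 : face S 1 0 l = 1) (hl1 : face S 1 1 l = 1) :
  face S 2 3 (proj3 (gcomm (degen S 2 0 l) (degen S 2 2 (degen S 1 1 m)))) =
  omega (face S 1 2 l) m * l * (degen S 1 1 m * l * (degen S 1 1 m)^-1)^-1.
Proof.
rewrite /proj3 /gcomm /omega; simp_sd; rewrite ?hm ?hl0 ?hl1; simp_sd; gnorm; done.
Qed.

Lemma K4 (a b : SG S 2) (ha0 : face S 1 0 a = 1) (ha1 : face S 1 1 a = 1) (hb0 : face S 1 0 b = 1) (hb1 : face S 1 1 b = 1) :
  face S 2 3 (proj3 (gcomm (degen S 2 0 a) (degen S 2 1 b))) =
  omega (face S 1 2 a) (face S 1 2 b) * gcomm a b.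
Proof.
rewrite /proj3 /gcomm /omega; simp_sd; rewrite ?ha0 ?ha1 ?hb0 ?hb1; simp_sd; gnorm; done.
Qed.

Lemma m1I (x : SG S 1) : face S 0 0 x = 1 -> moore x. Proof. by move=> h [|i]. Qed.
Lemma m1E (x : SG S 1) : moore x -> face S 0 0 x = 1. Proof. by move=> h; apply: h. Qed.
Lemma m2I (x : SG S 2) : face S 1 0 x = 1 -> face S 1 1 x = 1 -> moore x.
Proof. by move=> h0 h1 [|[|i]]. Qed.
Lemma m2E0 (x : SG S 2) : moore x -> face S 1 0 x = 1. Proof. by move=> h; apply: h. Qed.
Lemma m2E1 (x : SG S 2) : moore x -> face S 1 1 x = 1. Proof. by move=> h; apply: h. Qed.
Lemma m3E0 (x : SG S 3) : moore x -> face S 2 0 x = 1. Proof. by move=> h; apply: h. Qed.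
Lemma m3E1 (x : SG S 3) : moore x -> face S 2 1 x = 1. Proof. by move=> h; apply: h. Qed.
Lemma m3E2 (x : SG S 3) : moore x -> face S 2 2 x = 1. Proof. by move=> h; apply: h. Qed.

Lemma moore_sub n : is_subgroup (@moore S n).
Proof.
case: n => [|n]; first by split.
split.
- by move=> i _; rewrite face_one.
- by move=> x y hx hy i hi; rewrite face_mul hx ?hy ?mulg1.
- by move=> x hx i hi; rewrite face_inv hx ?invg1.
Qed.

Lemma peiffer1_moore (x y : SG S 1) : moore x -> moore y -> moore (peiffer1 x y).
Proof.
move=> /m1E hx /m1E hy; apply: m1I.
rewrite /peiffer1 /act1 /del1; simp_sd; rewrite hx hy; gnorm; done.
Qed.
Lemma act1_moore n (y : SG S 1) : moore y -> moore (act1 n y).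
Proof. move=> /m1E hy; apply: m1I; rewrite /act1; simp_sd; rewrite hy; gnorm; done. Qed.
Lemma act1M n (x y : SG S 1) : act1 n (x * y) = act1 n x * act1 n y.
Proof. rewrite /act1; gnorm; done. Qed.
Lemma act11 (y : SG S 1) : act1 1 y = y.
Proof. by rewrite /act1 degen_one; gnorm. Qed.
Lemma act1_comp n n' (y : SG S 1) : act1 (n * n') y = act1 n (act1 n' y).
Proof. rewrite /act1; simp_sd; gnorm; done. Qed.
Lemma del1_act n (x : SG S 1) : del1 (act1 n x) = n * del1 x * n^-1.
Proof. rewrite /act1 /del1; simp_sd; done. Qed.
Lemma del1M (x y : SG S 1) : del1 (x * y) = del1 x * del1 y.
Proof. by rewrite /del1 face_mul. Qed.
Lemma act1_peiffer n (x y : SG S 1) : act1 n (peiffer1 x y) = peiffer1 (act1 n x) (act1 n y).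
Proof. rewrite /peiffer1 !del1_act; rewrite /act1 /del1; simp_sd; gnorm; done. Qed.
Lemma del1_peiffer (x y : SG S 1) : del1 (peiffer1 x y) = 1.
Proof. rewrite /peiffer1 /act1 /del1; simp_sd; gnorm; done. Qed.

Lemma omega_moore (x y : SG S 1) : moore x -> moore y -> moore (omega x y).
Proof.
move=> /m1E hx /m1E hy; apply: m2I; rewrite /omega; simp_sd; rewrite ?hx ?hy; simp_sd; gnorm; done.
Qed.
Lemma omega_d2 (x y : SG S 1) : face S 1 2 (omega x y) = peiffer1 x y.
Proof. rewrite /omega /peiffer1 /act1 /del1; simp_sd; gnorm; done. Qed.
Lemma omega_1 (x : SG S 1) : omega x 1 = 1.
Proof. rewrite /omega; simp_sd; gnorm; done. Qed.
Lemma act2_omega n (x y : SG S 1) : act2 n (omega x y) = omega (act1 n x) (act1 n y).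
Proof. rewrite /act2 /omega /act1; simp_sd; gnorm; done. Qed.
Lemma act2_moore n (l : SG S 2) : moore l -> moore (act2 n l).
Proof.
move=> hl; have h0 := m2E0 hl; have h1 := m2E1 hl; apply: m2I; rewrite /act2; simp_sd; rewrite ?h0 ?h1; gnorm; done.
Qed.
Lemma act2M n (x y : SG S 2) : act2 n (x * y) = act2 n x * act2 n y.
Proof. rewrite /act2; gnorm; done. Qed.
Lemma act21 (y : SG S 2) : act2 1 y = y.
Proof. by rewrite /act2 !degen_one; gnorm. Qed.
Lemma act2_comp n n' (y : SG S 2) : act2 (n * n') y = act2 n (act2 n' y).
Proof. rewrite /act2; simp_sd; gnorm; done. Qed.
Lemma act2_d2 n (l : SG S 2) : face S 1 2 (act2 n l) = act1 n (face S 1 2 l).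
Proof. rewrite /act2 /act1; simp_sd; done. Qed.
Lemma d2_moore (l : SG S 2) : moore l -> moore (face S 1 2 l).
Proof. move=> hl; have h0 := m2E0 hl; apply: m1I; simp_sd; rewrite h0; simp_sd; done. Qed.

Lemma bd3_moore (z : SG S 2) : bd3 z -> moore z.
Proof.
case=> y hy <-; have h0 := m3E0 hy; have h1 := m3E1 hy; have h2 := m3E2 hy.
apply: m2I; simp_sd; rewrite ?h0 ?h1 ?h2; simp_sd; done.
Qed.
Lemma bd3_d2 (z : SG S 2) : bd3 z -> face S 1 2 z = 1.
Proof.
case=> y hy <-; have h2 := m3E2 hy; simp_sd; rewrite h2; simp_sd; done.
Qed.
Lemma bd3_act2 n (z : SG S 2) : bd3 z -> bd3 (act2 n z).
Proof.
case=> y hy <-; have h0 := m3E0 hy; have h1 := m3E1 hy; have h2 := m3E2 hy.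
set c := degen S 2 0 (degen S 1 0 (degen S 0 0 n)).
exists (c * y * c^-1).
- move=> i hi; case: i hi => [|[|[|]]] // _; rewrite /c; simp_sd; rewrite ?h0 ?h1 ?h2; gnorm; done.
- rewrite /c /act2; simp_sd; done.
Qed.
Lemma bd3_proj (z : SG S 3) : bd3 (face S 2 3 (proj3 z)).
Proof. by exists (proj3 z) => //; apply: proj3_moore. Qed.

Lemma omega_mul2 (x y y' : SG S 1) :
  omega x (y * y') = omega x y * (degen S 1 1 (x * y * x^-1) * omega x y' * (degen S 1 1 (x * y * x^-1))^-1).
Proof. rewrite /omega; simp_sd; gnorm; done. Qed.
Lemma omega_mul1 (x x' y : SG S 1) :
  omega (x * x') y = (degen S 1 0 x * omega x' y * (degen S 1 0 x)^-1) * omega x (x' * y * x'^-1).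
Proof. rewrite /omega; simp_sd; gnorm; done. Qed.
Lemma conj_s1_moore (m : SG S 1) (l : SG S 2) : moore m -> moore l -> moore (degen S 1 1 m * l * (degen S 1 1 m)^-1).
Proof.
move=> /m1E hm hl; have h0 := m2E0 hl; have h1 := m2E1 hl.
apply: m2I; simp_sd; rewrite ?hm ?h0 ?h1; simp_sd; gnorm; done.
Qed.
Lemma conj_s0_moore (m : SG S 1) (l : SG S 2) : moore m -> moore l -> moore (degen S 1 0 m * l * (degen S 1 0 m)^-1).
Proof.
move=> /m1E hm hl; have h0 := m2E0 hl; have h1 := m2E1 hl.
apply: m2I; simp_sd; rewrite ?hm ?h0 ?h1; simp_sd; gnorm; done.
Qed.
End Basic.
Set Implicit Arguments.
Unset Strict Implicit.

Section Gen.
Variable G : groupType.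
Implicit Types (H K : G -> Prop).

Lemma sg1 H : is_subgroup H -> H 1. Proof. by case. Qed.
Lemma sgM H x y : is_subgroup H -> H x -> H y -> H (x * y). Proof. by case=> _ h _; apply: h. Qed.
Lemma sgV H x : is_subgroup H -> H x -> H x^-1. Proof. by case=> _ _ h; apply: h. Qed.

Lemma gen_sub (P : G -> Prop) : is_subgroup (gen_by P).
Proof.
split.
- by move=> H hH _; apply: sg1.
- by move=> x y hx hy H hH hP; apply: sgM => //; [apply: hx|apply: hy].
- by move=> x hx H hH hP; apply: sgV => //; apply: hx.
Qed.
Lemma gen_in (P : G -> Prop) x : P x -> gen_by P x.
Proof. by move=> px H _ hP; apply: hP. Qed.
Lemma gen_ind (P H : G -> Prop) : is_subgroup H -> (forall y, P y -> H y) -> forall x, gen_by P x -> H x.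
Proof. by move=> hH hP x gx; apply: gx. Qed.

Lemma sg_and H H' : is_subgroup H -> is_subgroup H' -> is_subgroup (fun x => H x /\ H' x).
Proof.
move=> h1 h2; split; first by split; apply: sg1.
- by move=> x y [? ?] [? ?]; split; apply: sgM.
- by move=> x [? ?]; split; apply: sgV.
Qed.

Lemma gen_comm (P : G -> Prop) : (forall x y, P x -> P y -> x * y = y * x) ->
  forall x y, gen_by P x -> gen_by P y -> x * y = y * x.
Proof.
move=> hc.
have sgc (z : G) : is_subgroup (fun x => x * z = z * x).
  split; first by rewrite mul1g mulg1.
  - by move=> x y hx hy; rewrite -mulgA hy !mulgA hx.
  - move=> x hx.
    have e : x^-1 * (x * z) * x^-1 = x^-1 * (z * x) * x^-1 by rewrite hx.
    by rewrite mulKg mulgA mulgK in e.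
have h1 x y : gen_by P x -> P y -> x * y = y * x.
  move=> gx py.
  have := @gen_ind P (fun x => x * y = y * x) (sgc y).
  move=> /(_ _ x gx) /=; apply=> z pz; exact: hc.
move=> x y gx gy; apply: esym.
have := @gen_ind P (fun y => y * x = x * y) (sgc x).
move=> /(_ _ y gy) /=; apply=> z pz.
by rewrite (h1 x z gx pz).
Qed.

End Gen.

Section Quot.
Variables (G Q : groupType) (H K : G -> Prop) (q : G -> Q).
Hypothesis hH : is_subgroup H.
Hypothesis hq : is_quotient_map H K q.

Lemma qM x y : H x -> H y -> q (x * y) = q x * q y. Proof. by case: hq => h _ _; apply: h. Qed.
Lemma qsurj m : exists2 x, H x & q x = m. Proof. by case: hq => _ h _; apply: h. Qed.
Lemma qker x : H x -> (q x = 1 <-> K x). Proof. by case: hq => _ _ h; apply: h. Qed.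
Lemma qone : q 1 = 1.
Proof. apply: (mulgI (q 1)); by rewrite -qM ?mulg1 //; apply: sg1. Qed.
Lemma qV x : H x -> q x^-1 = (q x)^-1.
Proof. move=> hx; apply: (mulgI (q x)); by rewrite -qM ?mulgV ?qone //; apply: sgV. Qed.
Lemma qK x : H x -> K x -> q x = 1. Proof. by move=> hx kx; apply/qker. Qed.
Lemma q_eqK x y : H x -> H y -> q x = q y -> K (x^-1 * y).
Proof.
move=> hx hy e; apply/qker; first by apply: sgM => //; apply: sgV.
by rewrite qM ?qV // ?e ?mulVg //; apply: sgV.
Qed.
Lemma pickq m : {x | H x /\ q x = m}.
Proof. apply: cid; have [x hx e] := qsurj m; by exists x. Qed.

Lemma transfer (P : G -> Prop) :
  (forall x y, H x -> H y -> P x -> P y -> P (x * y)) ->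
  (forall x, H x -> P x -> P x^-1) ->
  (forall x, H x -> K x -> P x) ->
  is_subgroup (fun u => forall z, H z -> q z = u -> P z).
Proof.
move=> pM pV pK; split.
- by move=> z hz e; apply: (pK) => //; apply/qker.
- move=> u v hu hv z hz e.
  have [z1 [h1 e1]] := pickq u; have [z2 [h2 e2]] := pickq v.
  have h12 : H (z1 * z2) by apply: sgM.
  have kk : K ((z1 * z2)^-1 * z) by apply: q_eqK => //; rewrite e qM // e1 e2.
  have -> : z = (z1 * z2) * ((z1 * z2)^-1 * z) by rewrite mulVKg.
  apply: (pM) => //; first by apply: sgM => //; apply: sgV.
  + by apply: (pM) => //; [apply: (hu) | apply: (hv)].
  + apply: (pK) => //; by apply: sgM => //; apply: sgV.
- move=> u hu z hz e.
  have [z1 [h1 e1]] := pickq u.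
  have kk : K (z1^-1^-1 * z) by apply: q_eqK => //; [apply: sgV | rewrite qV // e1].
  rewrite invgK in kk.
  have hk : H (z1 * z) by apply: sgM.
  have -> : z = z1^-1 * (z1 * z) by rewrite mulKg.
  apply: (pM) => //; first by apply: sgV.
  + by apply: (pV) => //; apply: (hu).
  + exact: pK.
Qed.

End Quot.

Section Gen2.
Variables (G X : groupType) (H : G -> Prop) (f : G -> X).
Hypothesis hH : is_subgroup H.
Hypothesis hf : forall x y, H x -> H y -> f (x * y) = f x * f y.
Lemma hf1 : f 1 = 1.
Proof. apply: (mulgI (f 1)); rewrite -hf ?mulg1 //; exact: sg1. Qed.
Lemma hfV x : H x -> f x^-1 = (f x)^-1.
Proof. move=> hx; apply: (mulgI (f x)); by rewrite -hf ?mulgV ?hf1 //; apply: sgV. Qed.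
Lemma ker_sub : is_subgroup (fun z => H z /\ f z = 1).
Proof.
split; first by split; [apply: sg1 | apply: hf1].
- by move=> x y [hx ex] [hy ey]; split; [apply: sgM | rewrite hf // ex ey mulg1].
- by move=> x [hx ex]; split; [apply: sgV | rewrite hfV // ex invg1].
Qed.
Lemma hf_eq x y : H x -> H y -> f (x^-1 * y) = 1 -> f x = f y.
Proof.
move=> hx hy; rewrite hf ?hfV //; last by apply: sgV.
by move=> e; apply: (mulgI (f x)^-1); rewrite mulVg e.
Qed.
Lemma pre_sub (P : X -> Prop) : is_subgroup P -> is_subgroup (fun z => H z /\ P (f z)).
Proof.
move=> hP; split; first by split; [apply: sg1 | rewrite hf1; apply: sg1].
- by move=> x y [hx ex] [hy ey]; split; [apply: sgM | rewrite hf //; apply: sgM].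
- by move=> x [hx ex]; split; [apply: sgV | rewrite hfV //; apply: sgV].
Qed.
End Gen2.

Section GenZ.
Variables (G : groupType) (X : zmodType) (H : G -> Prop) (f : G -> X).
Hypothesis hH : is_subgroup H.
Hypothesis hf : forall x y, H x -> H y -> f (x * y) = (f x + f y)%R.
Lemma zf1 : f 1 = 0%R.
Proof. apply: (GRing.addrI (f 1)); rewrite -hf ?mulg1 ?GRing.addr0 //; exact: sg1. Qed.
Lemma zfV x : H x -> f x^-1 = (- f x)%R.
Proof. move=> hx; apply: (GRing.addrI (f x)); by rewrite -hf ?mulgV ?zf1 ?GRing.subrr //; apply: sgV. Qed.
Lemma zker_sub : is_subgroup (fun z => H z /\ f z = 0%R).
Proof.
split; first by split; [apply: sg1 | apply: zf1].
- by move=> x y [hx ex] [hy ey]; split; [apply: sgM | rewrite hf // ex ey GRing.addr0].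
- by move=> x [hx ex]; split; [apply: sgV | rewrite zfV // ex GRing.oppr0].
Qed.
Lemma zf_eq x y : H x -> H y -> f (x^-1 * y) = 0%R -> f x = f y.
Proof.
move=> hx hy; rewrite hf ?zfV //; last by apply: sgV.
by move/eqP; rewrite GRing.addrC GRing.subr_eq0 => /eqP.
Qed.
End GenZ.

Lemma true_sub (G : groupType) : is_subgroup (fun _ : G => True). Proof. by []. Qed.

Lemma q_Keq (G Q : groupType) (H K : G -> Prop) (q : G -> Q) : is_subgroup H -> is_quotient_map H K q ->
  forall x y, H x -> H y -> K (x^-1 * y) -> q x = q y.
Proof.
move=> hH hq x y hx hy k; apply: (hf_eq hH (qM hq)) => //.
by apply/(qker hq) => //; apply: sgM => //; apply: sgV.
Qed.

Section SubAb.
Variables (G : groupType) (P : G -> Prop).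
Hypothesis HP : is_subgroup P.
Hypothesis Hc : forall x y, P x -> P y -> x * y = y * x.
Definition subab (_ : is_subgroup P) (_ : forall x y, P x -> P y -> x * y = y * x) := {x : G | P x}.
Local Notation SA := (subab HP Hc).
HB.instance Definition _ := gen_eqMixin SA.
HB.instance Definition _ := gen_choiceMixin SA.
Definition sa_zero : SA := exist _ 1 (sg1 HP).
Definition sa_add (a b : SA) : SA :=
  exist _ (proj1_sig a * proj1_sig b) (sgM HP (proj2_sig a) (proj2_sig b)).
Definition sa_opp (a : SA) : SA := exist _ (proj1_sig a)^-1 (sgV HP (proj2_sig a)).
Lemma sa_eq (a b : SA) : proj1_sig a = proj1_sig b -> a = b.
Proof. case: a b => [a pa] [b pb] /= e; subst b; congr exist; exact: Prop_irrelevance. Qed.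
Lemma sa_addA : associative sa_add. Proof. by move=> a b c; apply: sa_eq; rewrite /= mulgA. Qed.
Lemma sa_addC : commutative sa_add. Proof. by move=> [a pa] [b pb]; apply: sa_eq; rewrite /= Hc. Qed.
Lemma sa_add0 : left_id sa_zero sa_add. Proof. by move=> a; apply: sa_eq; rewrite /= mul1g. Qed.
Lemma sa_addN : left_inverse sa_zero sa_opp sa_add. Proof. by move=> a; apply: sa_eq; rewrite /= mulVg. Qed.
HB.instance Definition _ := GRing.isZmodule.Build SA sa_addA sa_addC sa_add0 sa_addN.
Lemma sa_valD (a b : SA) : proj1_sig (a + b)%R = proj1_sig a * proj1_sig b. Proof. by []. Qed.
Lemma sa_val0 : proj1_sig (0%R : SA) = 1. Proof. by []. Qed.
End SubAb.
Set Implicit Arguments.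
Unset Strict Implicit.

Ltac gnorm := rewrite ?invgM ?invgK ?invg1; rewrite ?mulgA;
  repeat progress rewrite ?mulgK ?mulgVK ?mulVg ?mulgV ?mul1g ?mulg1.

Section Main.
Variable S : simplicial_group.
Variables (M : groupType) (q1 : SG S 1 -> M).
Hypothesis Hq1 : is_quotient_map (@moore S 1) (P3 (S:=S)) q1.
Variables (Q : groupType) (q : SG S 2 -> Q).
Hypothesis Hq : is_quotient_map (@moore S 2) (bd3 (S:=S)) q.
Variables (L : groupType) (q2 : Q -> L).
Hypothesis Hq2 : is_quotient_map (fun _ => True) (P3' q) q2.

Let N1 := moore_sub S 1.
Let N2 := moore_sub S 2.
Local Notation P3S := (P3 (S:=S)).

Lemma act1V n (x : SG S 1) : act1 n x^-1 = (act1 n x)^-1.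
Proof. exact: (homV (act1M n)). Qed.

Definition pick1 (m : M) : SG S 1 := proj1_sig (pickq Hq1 m).
Lemma pick1_m m : moore (pick1 m). Proof. by case: (proj2_sig (pickq Hq1 m)). Qed.
Lemma pick1_q m : q1 (pick1 m) = m. Proof. by case: (proj2_sig (pickq Hq1 m)). Qed.

Lemma P3_sub : is_subgroup (P3 (S:=S)). Proof. exact: gen_sub. Qed.

Lemma P3_gen x y w : moore x -> moore y -> moore w ->
  P3S (peiffer1 x (peiffer1 y w)) /\ P3S (peiffer1 (peiffer1 x y) w).
Proof.
move=> hx hy hw; split; apply: gen_in; exists x, y, w; split=> //; [left|right]; done.
Qed.

Lemma P3_del z : P3S z -> moore z /\ del1 z = 1.
Proof.
apply: (gen_ind (ker_sub N1 (f:=@del1 S) (fun x y _ _ => del1M x y))).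
move=> _ [x [y [w [hx hy hw [->|->]]]]]; split; rewrite ?del1_peiffer //;
  repeat apply: peiffer1_moore => //.
Qed.

Lemma P3_act n z : P3S z -> P3S (act1 n z).
Proof.
move=> pz; suff : moore z /\ P3S (act1 n z) by case.
apply: (gen_ind (pre_sub N1 (f := act1 n) (fun x y _ _ => act1M n x y) P3_sub)) pz.
move=> _ [x [y [w [hx hy hw [->|->]]]]]; (split; first by repeat apply: peiffer1_moore => //);
  rewrite !act1_peiffer; have [h1 h2] := P3_gen (act1_moore n hx) (act1_moore n hy) (act1_moore n hw); done.
Qed.

Lemma q1M x y : moore x -> moore y -> q1 (x * y) = q1 x * q1 y.
Proof. by move=> hx hy; apply: (qM Hq1). Qed.

Definition dM (m : M) : SG S 0 := del1 (pick1 m).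
Lemma dM_q x : moore x -> dM (q1 x) = del1 x.
Proof.
move=> hx; rewrite /dM; apply: (hf_eq N1 (f := @del1 S) (fun x y _ _ => del1M x y)) => //.
  exact: pick1_m.
by case: (P3_del (q_eqK N1 Hq1 (pick1_m _) hx (pick1_q _))).
Qed.

Definition actM (n : SG S 0) (m : M) : M := q1 (act1 n (pick1 m)).
Lemma actM_q n y : moore y -> actM n (q1 y) = q1 (act1 n y).
Proof.
move=> hy; rewrite /actM; apply: (q_Keq N1 Hq1); try apply: act1_moore => //; first exact: pick1_m.
rewrite -act1V -act1M; apply: P3_act; exact: (q_eqK N1 Hq1 (pick1_m _) hy (pick1_q _)).
Qed.

Definition r (z : SG S 2) : L := q2 (q z).
Lemma rM x y : moore x -> moore y -> r (x * y) = r x * r y.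
Proof. by move=> hx hy; rewrite /r (qM Hq hx hy) (qM Hq2 I I). Qed.
Lemma r1 : r 1 = 1.
Proof. by rewrite /r (qone N2 Hq) (qone (@true_sub Q) Hq2). Qed.
Lemma rV x : moore x -> r x^-1 = (r x)^-1.
Proof. exact: (hfV N2 rM). Qed.
Lemma rK z : bd3 z -> r z = 1.
Proof. by move=> hz; rewrite /r (qK Hq (bd3_moore hz) hz) (qone (@true_sub Q) Hq2). Qed.
Lemma r_P3' x y w : moore x -> moore y -> moore w ->
  r (omega (peiffer1 x y) w) = 1 /\ r (omega x (peiffer1 y w)) = 1.
Proof.
move=> hx hy hw; split; apply: (qK Hq2 I); apply: gen_in; exists x, y, w; split=> //; [left|right]; done.
Qed.

Definition W (x y : SG S 1) : L := r (omega x y).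

Lemma r_desc (X : groupType) (f : SG S 2 -> X) :
  (forall x y, moore x -> moore y -> f (x * y) = f x * f y) ->
  (forall z, bd3 z -> f z = 1) ->
  (forall x y w, moore x -> moore y -> moore w ->
     f (omega (peiffer1 x y) w) = 1 /\ f (omega x (peiffer1 y w)) = 1) ->
  forall z1 z2, moore z1 -> moore z2 -> r z1 = r z2 -> f z1 = f z2.
Proof.
move=> hf hb ho z1 z2 h1 h2 e.
have U' : is_subgroup (fun u => forall z, moore z -> q z = u -> f z = 1).
  apply: (transfer N2 Hq).
  - by move=> x y hx hy ex ey; rewrite hf // ex ey mulg1.
  - by move=> x hx ex; rewrite (hfV N2 hf) // ex invg1.
  - by move=> x hx kx; apply: hb.
have kq : P3' (S:=S) q ((q z1)^-1 * q z2) := q_eqK (@true_sub Q) Hq2 I I e.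
have eq : (q z1)^-1 * q z2 = q (z1^-1 * z2) by rewrite (qM Hq (sgV N2 h1) h2) (qV N2 Hq h1).
have gens : forall u, (fun z => exists x y w, [/\ moore x, moore y, moore w &
            (z = q (omega (peiffer1 x y) w) \/ z = q (omega x (peiffer1 y w)))]) u ->
    forall z, moore z -> q z = u -> f z = 1.
  move=> _ [x [y [w [hx hy hw [->|->]]]]] z hz ez.
  - have hom := omega_moore (peiffer1_moore hx hy) hw.
    rewrite (hf_eq N2 hf hz hom) ?(proj1 (ho _ _ _ hx hy hw)) //; apply: hb.
    exact: (q_eqK N2 Hq hz hom ez).
  - have hom := omega_moore hx (peiffer1_moore hy hw).
    rewrite (hf_eq N2 hf hz hom) ?(proj2 (ho _ _ _ hx hy hw)) //; apply: hb.
    exact: (q_eqK N2 Hq hz hom ez).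
have gU := gen_ind U' gens kq.
apply: (hf_eq N2 hf h1 h2); apply: (gU _ (sgM N2 (sgV N2 h1) h2)); by rewrite eq.
Qed.

Definition pick2 (l : L) : SG S 2 := proj1_sig (pickq Hq (proj1_sig (pickq Hq2 l))).
Lemma pick2_m l : moore (pick2 l). Proof. by case: (proj2_sig (pickq Hq (proj1_sig (pickq Hq2 l)))). Qed.
Lemma pick2_r l : r (pick2 l) = l.
Proof.
rewrite /r /pick2; case: (proj2_sig (pickq Hq (proj1_sig (pickq Hq2 l)))) => _ ->.
by case: (proj2_sig (pickq Hq2 l)).
Qed.

Definition delL (l : L) : M := q1 (face S 1 2 (pick2 l)).
Lemma delL_r z : moore z -> delL (r z) = q1 (face S 1 2 z).
Proof.
move=> hz; apply: (r_desc (f := fun z => q1 (face S 1 2 z)) _ _ _ (pick2_m _) hz).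
- by move=> x y hx hy; rewrite face_mul q1M //; apply: d2_moore.
- by move=> z' hb; rewrite bd3_d2 // (qone N1 Hq1).
- move=> x y w hx hy hw; rewrite !omega_d2.
  have [h1 h2] := P3_gen hx hy hw.
  split; apply: (qK Hq1) => //; repeat apply: peiffer1_moore => //.
- by rewrite pick2_r.
Qed.

Definition actL (n : SG S 0) (l : L) : L := r (act2 n (pick2 l)).
Lemma actL_r n z : moore z -> actL n (r z) = r (act2 n z).
Proof.
move=> hz; apply: (r_desc (f := fun z => r (act2 n z)) _ _ _ (pick2_m _) hz).
- by move=> x y hx hy; rewrite act2M rM //; apply: act2_moore.
- by move=> z' hb; rewrite rK //; apply: bd3_act2.
- move=> x y w hx hy hw; rewrite !act2_omega !act1_peiffer.
  by apply: r_P3'; apply: act1_moore.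
- by rewrite pick2_r.
Qed.

Lemma wit (z : SG S 3) : r (face S 2 3 (proj3 z)) = 1.
Proof. exact: rK (bd3_proj z). Qed.

Lemma moore_inv2 (x : SG S 2) : moore x -> moore x^-1. Proof. exact: sgV. Qed.

Lemma F9 m l : moore m -> moore l ->
  r (act2 (del1 m) l) = r (degen S 1 0 m * l * (degen S 1 0 m)^-1).
Proof.
move=> hm hl; have e := wit (gcomm (degen S 2 1 (degen S 1 0 m)) (degen S 2 2 l)).
rewrite K2 ?(m1E hm) ?(m2E0 hl) ?(m2E1 hl) // in e.
change (r (act2 (del1 m) l * (degen S 1 0 m * l * (degen S 1 0 m)^-1)^-1) = 1) in e.
rewrite rM ?rV in e; try apply: moore_inv2; try apply: act2_moore => //; try apply: conj_s0_moore => //.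
exact: divg1_eq.
Qed.

Lemma F8 m l : moore m -> moore l ->
  r (degen S 1 0 m * l * (degen S 1 0 m)^-1) =
  W m (face S 1 2 l) * r (degen S 1 1 m * l * (degen S 1 1 m)^-1).
Proof.
move=> hm hl; have e := wit (gcomm (degen S 2 2 (degen S 1 0 m)) (degen S 2 1 l)).
rewrite K3 ?(m1E hm) ?(m2E0 hl) ?(m2E1 hl) // in e.
have hw := omega_moore hm (d2_moore hl); have hc1 := conj_s1_moore hm hl; have hc0 := conj_s0_moore hm hl.
rewrite (rM (sgM N2 hw hc1) (sgV N2 hc0)) (rM hw hc1) (rV hc0) in e.
by rewrite (divg1_eq e).
Qed.

Lemma F7 m l : moore m -> moore l ->
  r (degen S 1 1 m * l * (degen S 1 1 m)^-1) = W (face S 1 2 l) m * r l.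
Proof.
move=> hm hl; have e := wit (gcomm (degen S 2 0 l) (degen S 2 2 (degen S 1 1 m))).
rewrite K5 ?(m1E hm) ?(m2E0 hl) ?(m2E1 hl) // in e.
have hw := omega_moore (d2_moore hl) hm; have hc1 := conj_s1_moore hm hl.
rewrite (rM (sgM N2 hw hl) (sgV N2 hc1)) (rM hw hl) (rV hc1) in e.
by rewrite (divg1_eq e).
Qed.

Lemma F4 a b : moore a -> moore b ->
  W (face S 1 2 a) (face S 1 2 b) = gcomm (r b) (r a).
Proof.
move=> ha hb; have e := wit (gcomm (degen S 2 0 a) (degen S 2 1 b)).
rewrite K4 ?(m2E0 ha) ?(m2E1 ha) ?(m2E0 hb) ?(m2E1 hb) // in e.
have hw := omega_moore (d2_moore ha) (d2_moore hb).
rewrite /gcomm in e *.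
have hab := sgM N2 ha hb; have habi := sgM N2 hab (sgV N2 ha).
rewrite (rM hw (sgM N2 habi (sgV N2 hb))) (rM habi (sgV N2 hb)) (rM hab (sgV N2 ha)) (rM ha hb) (rV ha) (rV hb) in e.
rewrite /W; have := congr1 (fun x => x^-1) (mulg1_eq e); rewrite invgK /= => ->; gnorm; done.
Qed.

Lemma Wpeif x y m : moore x -> moore y -> moore m ->
  W (peiffer1 x y) m = 1 /\ W m (peiffer1 x y) = 1.
Proof.
move=> hx hy hm; split; first by case: (r_P3' hx hy hm).
by case: (r_P3' hm hx hy).
Qed.

Lemma F7' m x y : moore m -> moore x -> moore y ->
  r (degen S 1 1 m * omega x y * (degen S 1 1 m)^-1) = W x y.
Proof.
move=> hm hx hy; rewrite F7 //; last exact: omega_moore.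
by rewrite omega_d2 (proj1 (Wpeif hx hy hm)) mul1g.
Qed.

Lemma F8' m x y : moore m -> moore x -> moore y ->
  r (degen S 1 0 m * omega x y * (degen S 1 0 m)^-1) = W x y.
Proof.
move=> hm hx hy; rewrite F8 //; last exact: omega_moore.
by rewrite omega_d2 (proj2 (Wpeif hx hy hm)) mul1g F7'.
Qed.

Lemma Wcomm a b c e : moore a -> moore b -> moore c -> moore e ->
  W a b * W c e = W c e * W a b.
Proof.
move=> ha hb hc he.
have := F4 (omega_moore hc he) (omega_moore ha hb).
rewrite !omega_d2 (proj1 (Wpeif hc he (peiffer1_moore ha hb))) /gcomm -/(W a b) -/(W c e).
move=> e1; have e2 := divg1_eq (esym e1).
by rewrite -[W c e in RHS]e2 mulgVK.
Qed.

Lemma W_1 x : W x 1 = 1. Proof. by rewrite /W omega_1 r1. Qed.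

Lemma I2 x y y' : moore x -> moore y -> moore y' -> W x (y * y') = W x y * W x y'.
Proof.
move=> hx hy hy'.
have hm := sgM N1 (sgM N1 hx hy) (sgV N1 hx).
rewrite /W omega_mul2 rM ?F7' //; [exact: omega_moore | apply: conj_s1_moore => //; exact: omega_moore].
Qed.

Lemma W_inv2 x y : moore x -> moore y -> W x y^-1 = (W x y)^-1.
Proof.
move=> hx hy; have := I2 hx hy (sgV N1 hy); rewrite mulgV W_1 => e.
by rewrite -(mulg1_eq (esym e)).
Qed.

Lemma I1 x x' y : moore x -> moore x' -> moore y -> W (x * x') y = W x y * W x' y.
Proof.
move=> hx hx' hy.
have hm := sgM N1 (sgM N1 hx' hy) (sgV N1 hx').
rewrite /W omega_mul1 rM; last first.
- exact: omega_moore.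
- by apply: conj_s0_moore => //; exact: omega_moore.
rewrite F8' // -/(W x (x' * y * x'^-1)) -/(W x' y) -/(W x y).
rewrite (I2 hx (sgM N1 hx' hy) (sgV N1 hx')) (I2 hx hx' hy) (W_inv2 hx hx').
rewrite (Wcomm hx hx' hx hy) mulgK; exact: Wcomm.
Qed.

Definition PA : L -> Prop := gen_by (fun z => exists x y, [/\ moore x, moore y & z = W x y]).
Lemma PA_sub : is_subgroup PA. Proof. exact: gen_sub. Qed.
Lemma PA_W x y : moore x -> moore y -> PA (W x y).
Proof. by move=> hx hy; apply: gen_in; exists x, y. Qed.
Lemma PA_comm a b : PA a -> PA b -> a * b = b * a.
Proof.
apply: gen_comm => _ _ [x [y [hx hy ->]]] [x' [y' [hx' hy' ->]]]; exact: Wcomm.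
Qed.

Ltac mo := solve [ assumption | exact: pick2_m | exact: pick1_m
  | apply: act2_moore; mo | apply: act1_moore; mo | apply: d2_moore; mo
  | apply: omega_moore; mo | apply: peiffer1_moore; mo
  | apply: conj_s0_moore; mo | apply: conj_s1_moore; mo
  | apply: (sgV N2); mo | apply: (sgV N1); mo | apply: (sgM N2); mo | apply: (sgM N1); mo ].

Lemma rE (l : L) : l = r (pick2 l). Proof. by rewrite pick2_r. Qed.
Lemma q1E (m : M) : m = q1 (pick1 m). Proof. by rewrite pick1_q. Qed.

Lemma actLM n a b : actL n (a * b) = actL n a * actL n b.
Proof.
have ha := pick2_m a; have hb := pick2_m b.
rewrite [a]rE [b]rE -(rM ha hb) !actL_r ?act2M ?(rM (act2_moore n ha) (act2_moore n hb)) //; try mo.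
Qed.

Lemma PA_act n l : PA l -> PA (actL n l).
Proof.
move=> pl; suff : True /\ PA (actL n l) by case.
apply: (gen_ind (pre_sub (@true_sub L) (f := actL n) (fun a b _ _ => actLM n a b) PA_sub)) pl.
move=> _ [x [y [hx hy ->]]]; split => //.
rewrite /W actL_r ?act2_omega; last exact: omega_moore.
by apply: PA_W; apply: act1_moore.
Qed.

Lemma dM_hom a b : dM (a * b) = dM a * dM b.
Proof.
have ha := pick1_m a; have hb := pick1_m b.
rewrite [a]q1E [b]q1E -(q1M ha hb) !dM_q ?del1M //; try mo.
Qed.

Lemma actM_hom n a b : actM n (a * b) = actM n a * actM n b.
Proof.
have ha := pick1_m a; have hb := pick1_m b.
rewrite [a]q1E [b]q1E -(q1M ha hb) !actM_q ?act1M ?(q1M (act1_moore n ha) (act1_moore n hb)) //; try mo.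
Qed.

Lemma actM_action : is_group_action actM.
Proof.
split.
- by move=> m; rewrite [m]q1E actM_q ?act11 //; exact: pick1_m.
- move=> n n' m; rewrite [m]q1E !actM_q ?act1_comp //; try apply: act1_moore; exact: pick1_m.
- exact: actM_hom.
Qed.

Lemma dM_act n m : dM (actM n m) = n * dM m * n^-1.
Proof.
rewrite [m]q1E actM_q ?dM_q ?del1_act //; try apply: act1_moore; exact: pick1_m.
Qed.

Lemma peifM x y : moore x -> moore y -> peiffer actM dM (q1 x) (q1 y) = q1 (peiffer1 x y).
Proof.
move=> hx hy; rewrite /peiffer /peiffer1 dM_q // actM_q //.
have ha := act1_moore (del1 x) hy.
have hxi := sgV N1 hx; have hyi := sgV N1 hy.
have h2 := sgM N1 ha hx; have h3 := sgM N1 h2 hyi.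
by rewrite (q1M h3 hxi) (q1M h2 hyi) (q1M ha hx) (qV N1 Hq1 hy) (qV N1 Hq1 hx).
Qed.

Lemma nil2M : nil2_module actM dM.
Proof.
split; first by split; [exact: dM_hom | exact: actM_action | exact: dM_act].
move=> x y z; rewrite [x]q1E [y]q1E [z]q1E.
have hx := pick1_m x; have hy := pick1_m y; have hz := pick1_m z.
rewrite !peifM //; try apply: peiffer1_moore => //.
have [h1 h2] := P3_gen hx hy hz.
by split; apply: (qK Hq1) => //; repeat apply: peiffer1_moore.
Qed.

Lemma delL_hom a b : delL (a * b) = delL a * delL b.
Proof.
have ha := pick2_m a; have hb := pick2_m b.
rewrite [a]rE [b]rE -(rM ha hb) !delL_r ?face_mul ?(q1M (d2_moore ha) (d2_moore hb)) //; try mo.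
Qed.

Lemma dM_delL a : dM (delL a) = 1.
Proof.
have ha := pick2_m a.
by rewrite [a]rE (delL_r ha) (dM_q (d2_moore ha)) /del1 ff_0_1_2 (m2E1 ha) face_one.
Qed.

Lemma actL_action : is_group_action actL.
Proof.
split.
- by move=> l; rewrite [l]rE actL_r ?act21 //; exact: pick2_m.
- move=> n n' l; rewrite [l]rE !actL_r ?act2_comp //; try apply: act2_moore; exact: pick2_m.
- exact: actLM.
Qed.

Lemma delL_act n a : delL (actL n a) = actM n (delL a).
Proof.
rewrite [a]rE actL_r ?delL_r ?act2_d2 ?actM_q //; try apply: act2_moore; try apply: d2_moore; exact: pick2_m.
Qed.

Section CC.
Variables (Mcr : groupType) (qcr : M -> Mcr) (C : zmodType) (cab : Mcr -> C)
  (T : zmodType) (t : C -> C -> T).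
Hypothesis Hcr : is_quotient_map (fun _ => True) (peiffer_subgroup actM dM) qcr.
Hypothesis Hab : is_abelianization cab.
Hypothesis Ht : is_tensor_square t.

Definition bar (m : M) : C := cab (qcr m).
Lemma cabM x y : cab (x * y) = (cab x + cab y)%R. Proof. by case: Hab => h _ _; apply: h. Qed.
Lemma barM x y : bar (x * y) = (bar x + bar y)%R.
Proof. by rewrite /bar (qM Hcr I I) cabM. Qed.
Lemma barV x : bar x^-1 = (- bar x)%R.
Proof. exact: (zfV (@true_sub M) (fun x y _ _ => barM x y) I). Qed.

Lemma bar_surj c : exists x, moore x /\ bar (q1 x) = c.
Proof.
case: Hab => _ hs _; have [u <-] := hs c.
have [m [_ <-]] := pickq Hcr u.
by exists (pick1 m); rewrite pick1_q; split => //; exact: pick1_m.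
Qed.
Definition pickC (c : C) : SG S 1 := proj1_sig (cid (bar_surj c)).
Lemma pickC_m c : moore (pickC c). Proof. by case: (proj2_sig (cid (bar_surj c))). Qed.
Lemma pickC_b c : bar (q1 (pickC c)) = c. Proof. by case: (proj2_sig (cid (bar_surj c))). Qed.
Lemma cE c : c = bar (q1 (pickC c)). Proof. by rewrite pickC_b. Qed.

Lemma cab1 : cab 1 = 0%R. Proof. exact: (zf1 (@true_sub Mcr) (fun x y _ _ => cabM x y)). Qed.

Lemma bar_peif x y : bar (peiffer actM dM x y) = 0%R.
Proof.
rewrite /bar (qK Hcr I) ?cab1 //; apply: gen_in; by exists x, y.
Qed.

Section Factor.
Variables (X : zmodType) (f : M -> X).
Hypothesis hf : forall a b, f (a * b) = (f a + f b)%R.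
Hypothesis hp : forall a b, f (peiffer actM dM a b) = 0%R.
Let hf' : forall a b, True -> True -> f (a * b) = (f a + f b)%R. Proof. by move=> a b _ _; apply: hf. Qed.

Lemma factor_bar m : bar m = 0%R -> f m = 0%R.
Proof.
move=> bm.
have Kf : forall z, peiffer_subgroup actM dM z -> f z = 0%R.
  move=> z pz; suff : True /\ f z = 0%R by case.
  apply: (gen_ind (zker_sub (@true_sub M) hf')) pz.
  by move=> _ [a [b ->]]; split.
have U : is_subgroup (fun u => forall z, True -> qcr z = u -> f z = 0%R).
  apply: (transfer (@true_sub M) Hcr).
  - by move=> x y _ _ ex ey; rewrite hf ex ey GRing.addr0.
  - by move=> x _ ex; rewrite (zfV (@true_sub M) hf') // ex GRing.oppr0.
  - by move=> x _ kx; apply: Kf.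
have gens : forall u, (exists a b : Mcr, u = gcomm a b) -> forall z, True -> qcr z = u -> f z = 0%R.
  move=> _ [a [b ->]] z _ ez.
  have [a' [_ ea]] := pickq Hcr a; have [b' [_ eb]] := pickq Hcr b.
  have eg : qcr (gcomm a' b') = qcr z.
    by rewrite ez /gcomm !(qM Hcr I I) !(qV (@true_sub M) Hcr I) ea eb.
  have k := q_eqK (@true_sub M) Hcr I I eg.
  rewrite -(zf_eq (@true_sub M) hf' I I (Kf _ k)).
  rewrite /gcomm !hf !(zfV (@true_sub M) hf') //.
  by rewrite (GRing.addrC (f a')) GRing.addrK GRing.subrr.
have cm : commutator_subgroup (qcr m) by case: Hab => _ _ h; apply/h.
exact: (gen_ind U gens cm m I erefl).
Qed.

Lemma bar_eq_f a b : bar a = bar b -> f a = f b.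
Proof.
move=> e; apply: (zf_eq (@true_sub M) hf') => //; apply: factor_bar.
by rewrite barM barV e GRing.addNr.
Qed.

Lemma descend_C : {F : C -> X | (forall u v, F (u + v)%R = (F u + F v)%R) /\ forall m, F (bar m) = f m}.
Proof.
exists (fun c => f (q1 (pickC c))); split.
- move=> u v; rewrite -hf; apply: bar_eq_f.
  have h1 := pickC_m u; have h2 := pickC_m v.
  by rewrite barM !pickC_b.
- by move=> m; apply: bar_eq_f; rewrite pickC_b.
Qed.
End Factor.

Section Descend.
Variables (X : zmodType) (f : SG S 1 -> X).
Hypothesis hf : forall x y, moore x -> moore y -> f (x * y) = (f x + f y)%R.
Hypothesis hp : forall x y, moore x -> moore y -> f (peiffer1 x y) = 0%R.

Lemma f_P3 z : P3S z -> f z = 0%R.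
Proof.
move=> pz; suff : moore z /\ f z = 0%R by case.
apply: (gen_ind (zker_sub N1 hf)) pz.
move=> _ [x [y [w [hx hy hw [->|->]]]]]; (split; first by mo); apply: hp; mo.
Qed.

Lemma f_q1 x y : moore x -> moore y -> q1 x = q1 y -> f x = f y.
Proof.
move=> hx hy e; apply: (zf_eq N1 hf) => //; apply: f_P3; exact: (q_eqK N1 Hq1 hx hy e).
Qed.

Definition fM (m : M) : X := f (pick1 m).
Lemma fM_q x : moore x -> fM (q1 x) = f x.
Proof. move=> hx; apply: f_q1 => //; [mo | by rewrite pick1_q]. Qed.
Lemma fM_add a b : fM (a * b) = (fM a + fM b)%R.
Proof.
have ha := pick1_m a; have hb := pick1_m b.
rewrite [a]q1E [b]q1E -(q1M ha hb) !fM_q //; [exact: hf | mo].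
Qed.
Lemma fM_peif a b : fM (peiffer actM dM a b) = 0%R.
Proof.
have ha := pick1_m a; have hb := pick1_m b.
by rewrite [a]q1E [b]q1E peifM // fM_q ?hp //; mo.
Qed.

Lemma descend : {F : C -> X | (forall u v, F (u + v)%R = (F u + F v)%R) /\
  forall x, moore x -> F (bar (q1 x)) = f x}.
Proof.
have [F [h1 h2]] := descend_C fM_add fM_peif.
by exists F; split => // x hx; rewrite h2 fM_q.
Qed.
End Descend.


Definition A : zmodType := subab PA_sub PA_comm.
Definition mo (x : SG S 1) : SG S 1 := if pselect (moore x) then x else 1.
Lemma mo_m x : moore (mo x).
Proof. rewrite /mo; destruct (pselect (moore x)) => //; exact: (sg1 N1). Qed.
Lemma mo_id x : moore x -> mo x = x.
Proof. by move=> h; rewrite /mo; destruct (pselect (moore x)). Qed.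
Definition wA (x y : SG S 1) : A := exist _ (W (mo x) (mo y)) (PA_W (mo_m x) (mo_m y)).
Lemma wA_val x y : moore x -> moore y -> proj1_sig (wA x y) = W x y.
Proof. by move=> hx hy; rewrite /= !mo_id. Qed.

Lemma F1_hf y x x' : moore x -> moore x' -> wA (x * x') y = (wA x y + wA x' y)%R.
Proof.
move=> hx hx'; apply: sa_eq; rewrite sa_valD /= (mo_id (sgM N1 hx hx')) (mo_id hx) (mo_id hx').
exact: I1 (mo_m y).
Qed.
Lemma F1_hp y a b : moore a -> moore b -> wA (peiffer1 a b) y = 0%R.
Proof.
move=> ha hb; apply: sa_eq; rewrite sa_val0 /= (mo_id (peiffer1_moore ha hb)).
exact: (proj1 (Wpeif ha hb (mo_m y))).
Qed.
Definition F1 y : C -> A := proj1_sig (descend (F1_hf y) (F1_hp y)).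
Lemma F1_add y u v : F1 y (u + v)%R = (F1 y u + F1 y v)%R.
Proof. exact: (proj1 (proj2_sig (descend (F1_hf y) (F1_hp y)))). Qed.
Lemma F1_bar y x : moore x -> F1 y (bar (q1 x)) = wA x y.
Proof. exact: (proj2 (proj2_sig (descend (F1_hf y) (F1_hp y)))). Qed.

Lemma g_hf c y y' : moore y -> moore y' -> F1 (y * y') c = (F1 y c + F1 y' c)%R.
Proof.
move=> hy hy'; have hx := pickC_m c.
rewrite [c]cE !F1_bar //; apply: sa_eq; rewrite sa_valD !wA_val //; try mo.
exact: I2.
Qed.
Lemma g_hp c a b : moore a -> moore b -> F1 (peiffer1 a b) c = 0%R.
Proof.
move=> ha hb; have hx := pickC_m c.
rewrite [c]cE !F1_bar //; apply: sa_eq; rewrite sa_val0 wA_val //; try mo.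
exact: (proj2 (Wpeif ha hb hx)).
Qed.
Definition Fb (c : C) : C -> A := proj1_sig (descend (g_hf c) (g_hp c)).
Lemma Fb_add2 c u v : Fb c (u + v)%R = (Fb c u + Fb c v)%R.
Proof. exact: (proj1 (proj2_sig (descend (g_hf c) (g_hp c)))). Qed.
Lemma Fb_bar c y : moore y -> Fb c (bar (q1 y)) = F1 y c.
Proof. exact: (proj2 (proj2_sig (descend (g_hf c) (g_hp c)))). Qed.
Lemma Fb_bia : biadditive Fb.
Proof.
split; last exact: Fb_add2.
move=> u u' v; have hy := pickC_m v.
by rewrite [v]cE !Fb_bar // F1_add.
Qed.
Lemma Fb_W x y : moore x -> moore y -> proj1_sig (Fb (bar (q1 x)) (bar (q1 y))) = W x y.
Proof. by move=> hx hy; rewrite Fb_bar // F1_bar // wA_val. Qed.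

Definition omA_spec := cid ((proj2 Ht) A Fb Fb_bia).
Definition omA : T -> A := proj1_sig omA_spec.
Lemma omA_add u v : omA (u + v)%R = (omA u + omA v)%R.
Proof. by case: (proj2_sig omA_spec). Qed.
Lemma omA_t a b : omA (t a b) = Fb a b.
Proof. by case: (proj2_sig omA_spec). Qed.
Definition om (u : T) : L := proj1_sig (omA u).
Lemma om_add u v : om (u + v)%R = om u * om v.
Proof. by rewrite /om omA_add sa_valD. Qed.
Lemma om_W x y : moore x -> moore y -> om (t (bar (q1 x)) (bar (q1 y))) = W x y.
Proof. by move=> hx hy; rewrite /om omA_t Fb_W. Qed.

Lemma t_uniq (X : zmodType) (g1 g2 : T -> X) : additive_map g1 -> additive_map g2 ->
  (forall x y, moore x -> moore y -> g1 (t (bar (q1 x)) (bar (q1 y))) = g2 (t (bar (q1 x)) (bar (q1 y)))) ->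
  forall u, g1 u = g2 u.
Proof.
move=> a1 a2 e u.
have bia : biadditive (fun a b => g1 (t a b)).
  case: (proj1 Ht) => h1 h2; split.
  - by move=> a a' b; rewrite h1 a1.
  - by move=> a b b'; rewrite h2 a1.
have [g [_ _ U]] := (proj2 Ht) X _ bia.
rewrite (U g1 a1) // (U g2 a2) // => a b.
have hx := pickC_m a; have hy := pickC_m b.
by rewrite [a]cE [b]cE e.
Qed.

Lemma phi_hf n x y : moore x -> moore y ->
  bar (q1 (act1 n (x * y))) = (bar (q1 (act1 n x)) + bar (q1 (act1 n y)))%R.
Proof. move=> hx hy; rewrite act1M q1M ?barM //; mo. Qed.
Lemma phi_hp n x y : moore x -> moore y -> bar (q1 (act1 n (peiffer1 x y))) = 0%R.
Proof. move=> hx hy; rewrite act1_peiffer -peifM ?bar_peif //; mo. Qed.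
Definition phi n : C -> C := proj1_sig (descend (phi_hf n) (phi_hp n)).
Lemma phi_add n u v : phi n (u + v)%R = (phi n u + phi n v)%R.
Proof. exact: (proj1 (proj2_sig (descend (phi_hf n) (phi_hp n)))). Qed.
Lemma phi_bar n x : moore x -> phi n (bar (q1 x)) = bar (q1 (act1 n x)).
Proof. exact: (proj2 (proj2_sig (descend (phi_hf n) (phi_hp n)))). Qed.
Lemma psi_bia n : biadditive (fun a b => t (phi n a) (phi n b)).
Proof.
case: (proj1 Ht) => h1 h2; split.
- by move=> a a' b; rewrite phi_add h1.
- by move=> a b b'; rewrite phi_add h2.
Qed.
Definition actT_spec n := cid ((proj2 Ht) T _ (psi_bia n)).
Definition actT n : T -> T := proj1_sig (actT_spec n).
Lemma actT_add n : additive_map (actT n). Proof. by case: (proj2_sig (actT_spec n)). Qed.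
Lemma actT_t n a b : actT n (t a b) = t (phi n a) (phi n b).
Proof. by rewrite /actT; case: (proj2_sig (actT_spec n)) => _ h _; rewrite h. Qed.

Lemma phi1 c : phi 1 c = c.
Proof. have hx := pickC_m c; by rewrite [c]cE phi_bar // act11. Qed.
Lemma phi_comp n n' c : phi (n * n') c = phi n (phi n' c).
Proof.
have hx := pickC_m c.
by rewrite [c]cE !phi_bar ?act1_comp //; mo.
Qed.

Lemma actT_action : is_zmod_action actT.
Proof.
split.
- apply: (t_uniq (g1 := actT 1) (g2 := id)); first exact: actT_add; first by [].
  by move=> x y hx hy; rewrite actT_t !phi1.
- move=> n n'; apply: (t_uniq (g1 := actT (n * n')) (g2 := fun u => actT n (actT n' u))).
  + exact: actT_add.
  + by move=> u v; rewrite !actT_add.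
  + by move=> x y hx hy; rewrite !actT_t !phi_comp.
- exact: actT_add.
Qed.

Lemma actT_bar n x y : actT n (t (bar x) (bar y)) = t (bar (actM n x)) (bar (actM n y)).
Proof.
have hx := pick1_m x; have hy := pick1_m y.
by rewrite [x]q1E [y]q1E actT_t !phi_bar // !actM_q.
Qed.

Definition actA n (a : A) : A := exist _ (actL n (proj1_sig a)) (PA_act n (proj2_sig a)).

Lemma om_actT n u : om (actT n u) = actL n (om u).
Proof.
have e : forall u, omA (actT n u) = actA n (omA u).
  apply: t_uniq => [u1 u2|u1 u2|x y hx hy].
  - by rewrite actT_add omA_add.
  - rewrite omA_add; apply: sa_eq; exact: (actLM n (sval (omA u1)) (sval (omA u2))).
  - apply: sa_eq; rewrite actT_t !phi_bar // !omA_t /= !Fb_W //; try mo.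
    by rewrite /W actL_r ?act2_omega //; mo.
by rewrite /om e.
Qed.

Lemma main_C : exists om : T -> L,
  (forall x y, moore x -> moore y ->
     om (t (cab (qcr (q1 x))) (cab (qcr (q1 y)))) = q2 (q (omega x y))) /\
  quadratic_module actM actL qcr cab t om delL dM.
Proof.
exists om; split; first exact: om_W.
rewrite /quadratic_module /=; split.
- split; [exact: nil2M | exact: Hcr | exact: Hab | exact: Ht |].
  exists (fun u => delL (om u)); split => //.
  + by move=> u v; rewrite om_add delL_hom.
  + move=> x y; have hx := pick1_m x; have hy := pick1_m y.
    rewrite [x]q1E [y]q1E (om_W hx hy) peifM //.
    by rewrite /W -/(r (omega _ _)) delL_r ?omega_d2 //; mo.
- split.
  + exact: dM_delL.
  + exact: om_add.
  + exact: delL_hom.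
  + split.
    * exact: actL_action.
    * exact: delL_act.
    * exists actT; split; [exact: actT_action | exact: actT_bar | exact: om_actT].
    * move=> a x; have hm := pick1_m x; have hl := pick2_m a.
      rewrite [x]q1E [a]rE dM_q // actL_r // delL_r // om_add.
      rewrite (om_W hm (d2_moore hl)) (om_W (d2_moore hl) hm).
      by rewrite F9 // F8 // F7 // !mulgA.
  + move=> a b; have ha := pick2_m a; have hb := pick2_m b.
    rewrite [a]rE [b]rE !delL_r // om_W; try exact: d2_moore.
    exact: F4.
Qed.
End CC.
End Main.

Theorem proposition6p3 (S : simplicial_group)
  (HD3 : forall x : SG S 3, D3 x)
  (M : groupType) (q1 : SG S 1 -> M)
  (Hq1 : is_quotient_map (@moore S 1) (P3 (S:=S)) q1)
  (Q : groupType) (q : SG S 2 -> Q)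
  (Hq : is_quotient_map (@moore S 2) (bd3 (S:=S)) q)
  (L : groupType) (q2 : Q -> L)
  (Hq2 : is_quotient_map (fun _ => True) (P3' q) q2) :
  exists (d : M -> SG S 0) (del : L -> M)
         (actM : SG S 0 -> M -> M) (actL : SG S 0 -> L -> L),
    [/\ (forall x, moore x -> d (q1 x) = face S 0 1 x),
        (forall x, moore x -> del (q2 (q x)) = q1 (face S 1 2 x)),
        (forall n y, moore y -> actM n (q1 y) = q1 (act1 n y)),
        (forall n y, moore y -> actL n (q2 (q y)) = q2 (q (act2 n y))) &
    forall (Mcr : groupType) (qcr : M -> Mcr) (C : zmodType) (cab : Mcr -> C)
           (T : zmodType) (t : C -> C -> T),
      is_quotient_map (fun _ => True) (peiffer_subgroup actM d) qcr ->
      is_abelianization cab ->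
      is_tensor_square t ->
      exists om : T -> L,
        (forall x y, moore x -> moore y ->
           om (t (cab (qcr (q1 x))) (cab (qcr (q1 y)))) = q2 (q (omega x y))) /\
        quadratic_module actM actL qcr cab t om del d].
Proof.
exists (dM Hq1), (delL q1 Hq Hq2), (actM Hq1), (actL Hq Hq2); split.
- by move=> x hx; apply: dM_q.
- by move=> x hx; apply: (delL_r Hq1 Hq Hq2 hx).
- by move=> n y hy; apply: actM_q.
- by move=> n y hy; apply: (actL_r Hq Hq2 n hy).
- move=> Mcr qcr C cab T t Hcr Hab Ht; exact: main_C.
Qed.
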